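(* Let $n\ge 1$ be an integer and $a,b,c:\{0,1,\dots,n+1\}\to\mathbb{R}$ with $a(k)\neq0$ and $c(k)\neq0$ for $k=0,\dots,n$. Let $\mathsf J(a,b,c)$ be the $(n+2)\times(n+2)$ tridiagonal matrix with rows and columns indexed by $0,\dots,n+1$, diagonal entries $\mathsf J_{kk}=b(k)$ ($k=0,\dots,n+1$), superdiagonal entries $\mathsf J_{k,k+1}=-a(k)$ and subdiagonal entries $\mathsf J_{k+1,k}=-c(k)$ ($k=0,\dots,n$), and all other entries $0$. Then $\mathsf J(a,b,c)$ is invertible if and only if $D_{\mathsf J}\neq0$, and in that case the entries of its inverse $\mathsf R=(r_{ks})_{k,s=0}^{n+1}$ are $$r_{ks}=\frac{1}{D_{\mathsf J}}\begin{cases}\Big(\prod_{j=k}^{s-1}a(j)\Big)\Phi_{\mathsf J}(k)\Psi_{\mathsf J}(s), & 0\le k\le s\le n+1,\\[1ex] \Big(\prod_{j=s}^{k-1}c(j)\Big)\Phi_{\mathsf J}(s)\Psi_{\mathsf J}(k), & 0\le s\le k\le n+1.\end{cases}$$ Moreover, $\det\mathsf R=D_{\mathsf J}^{-1}$.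
   Context: Empty products equal $1$ and empty sums equal $0$. For $m\in\mathbb{N}$ and a sequence $x$, the shift $x_m$ is $x_m(j)=x(j+m)$; $ac$ denotes the pointwise product $(ac)(j)=a(j)c(j)$. Chebyshev functions: for sequences $x,y$ set $P_{-1}(x,y)=0$, $P_0(x,y)=1$, and for $k\ge1$ $$P_k(x,y)=\sum_{m=0}^{\lfloor k/2\rfloor}(-1)^m\sum_{\alpha\in\ell_k^m}x^{\bar\alpha}y^{\alpha},$$ where: for $\alpha=(\alpha_1,\dots,\alpha_k)\in\{0,1\}^k$, $x^\alpha=\prod_{j=1}^k x(j)^{\alpha_j}$ and $|\alpha|=\sum_j\alpha_j$; $\ell_k^0=\{(0,\dots,0)\}$; for $m\ge1$, $\ell_k^m$ is the set of $\alpha\in\{0,1\}^k$ with $\alpha_k=0$, $|\alpha|=m$, and whose positions of ones $i_1<\dots<i_m$ satisfy $i_{j+1}-i_j\ge2$ for $j=1,\dots,m-1$; and $\bar\alpha\in\{0,1\}^k$ is defined by $\bar\alpha_{i_j}=\bar\alpha_{i_j+1}=0$ for $j=1,\dots,m$ and $\bar\alpha_i=1$ otherwise. Define $\Phi_{\mathsf J}(0)=1$, $\Phi_{\mathsf J}(k)=b(0)P_{k-1}(b,ac)-a(0)c(0)P_{k-2}(b_1,a_1c_1)$ for $k=1,\dots,n+1$; $\Psi_{\mathsf J}(k)=b(n+1)P_{n-k}(b_k,a_kc_k)-a(n)c(n)P_{n-k-1}(b_k,a_kc_k)$ for $k=0,\dots,n$, and $\Psi_{\mathsf J}(n+1)=1$;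 $D_{\mathsf J}=b(0)\big[b(n+1)P_n(b,ac)-a(n)c(n)P_{n-1}(b,ac)\big]-a(0)c(0)\big[b(n+1)P_{n-1}(b_1,a_1c_1)-a(n)c(n)P_{n-2}(b_1,a_1c_1)\big]$. *)

(* Defs.v *)
From HB Require Import structures.
From mathcomp Require Import all_boot all_order all_algebra.
Set Implicit Arguments. Unset Strict Implicit. Unset Printing Implicit Defensive.
Import Order.TTheory GRing.Theory Num.Theory.
Local Open Scope ring_scope.

Section Defs.
Variable R : realFieldType.

Definition shiftseq (x : nat -> R) (m : nat) : nat -> R := fun j => x (j + m)%N.

Definition pmul (x y : nat -> R) : nat -> R := fun j => x j * y j.

(* alpha in {0,1}^k is represented by a finite function on 'I_k; position
   i : 'I_k stands for the paper's (1-based) position i+1. *)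

Definition alphabar (k : nat) (al : {ffun 'I_k -> bool}) (i : 'I_k) : bool :=
  ~~ [exists j : 'I_k, al j && ((i == j) || (nat_of_ord i == (nat_of_ord j).+1))].

Definition ell (k m : nat) (al : {ffun 'I_k -> bool}) : bool :=
  if m == 0%N then [forall i, ~~ al i]
  else [&& [forall i : 'I_k, al i ==> ((nat_of_ord i).+1 < k)%N],
           #|[pred i | al i]| == m &
           [forall i : 'I_k, forall j : 'I_k,
              (al i && al j && (i < j)%N) ==> ((nat_of_ord i).+2 <= j)%N]].

Definition monom (k : nat) (x y : nat -> R) (al : {ffun 'I_k -> bool}) : R :=
  \prod_(i < k) (x (i.+1) ^+ alphabar al i * y (i.+1) ^+ al i).

Definition cheb_nat (x y : nat -> R) (k : nat) : R :=
  if k == 0%N then 1 else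
  \sum_(m < (k./2).+1) (-1) ^+ m * \sum_(al : {ffun 'I_k -> bool} | ell m al) monom x y al.

(* P_k on integer indices: P_{-1} = 0 (only k = -1 is ever used among negatives) *)
Definition cheb (x y : nat -> R) (k : int) : R :=
  match k with
  | Posz k => cheb_nat x y k
  | Negz _ => 0
  end.

Variables (a b c : nat -> R) (n : nat).

Definition ac := pmul a c.

Definition PhiJ (k : nat) : R :=
  if k == 0%N then 1 else
  b 0%N * cheb b ac (k%:Z - 1) - a 0%N * c 0%N * cheb (shiftseq b 1) (shiftseq ac 1) (k%:Z - 2).

Definition PsiJ (k : nat) : R :=
  if k == n.+1 then 1 else
  b n.+1 * cheb (shiftseq b k) (shiftseq ac k) ((n - k)%N%:Z)
  - a n * c n * cheb (shiftseq b k) (shiftseq ac k) ((n - k)%N%:Z - 1).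

Definition DJ : R :=
  b 0%N * (b n.+1 * cheb b ac n%:Z - a n * c n * cheb b ac (n%:Z - 1))
  - a 0%N * c 0%N * (b n.+1 * cheb (shiftseq b 1) (shiftseq ac 1) (n%:Z - 1)
                     - a n * c n * cheb (shiftseq b 1) (shiftseq ac 1) (n%:Z - 2)).

Definition Jmat : 'M[R]_(n.+2) :=
  \matrix_(i, j) (if i == j then b i
                  else if (nat_of_ord j == (nat_of_ord i).+1) then - a i
                  else if (nat_of_ord i == (nat_of_ord j).+1) then - c j
                  else 0).

Definition rJ (k s : nat) : R :=
  if (k <= s)%N then (\prod_(k <= j < s) a j) * PhiJ k * PsiJ s / DJ
  else (\prod_(s <= j < k) c j) * PhiJ s * PsiJ k / DJ.

End Defs.

(* Main.v *)
Require Import Defs.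
From HB Require Import structures.
From mathcomp Require Import all_boot all_order all_algebra.
From mathcomp Require Import ring zify.
From Stdlib Require Import FunctionalExtensionality.
Set Implicit Arguments. Unset Strict Implicit. Unset Printing Implicit Defensive.
Import Order.TTheory GRing.Theory Num.Theory.
Local Open Scope ring_scope.

Section Comb.
Variable R : realFieldType.
Implicit Types x y : nat -> R.

Lemma existsS k (P : pred 'I_k.+1) :
  [exists j, P j] = [exists j : 'I_k, P (lift ord_max j)] || P ord_max.
Proof.
apply/existsP/orP => [[j]|[/existsP[j Hj]|H]]; last 2 first.
- by exists (lift ord_max j).
- by exists ord_max.
case: (unliftP ord_max j) => [j' ->|->] H; last by right.
by left; apply/existsP; exists j'.
Qed.

Lemma forallS k (P : pred 'I_k.+1) :
  [forall j, P j] = [forall j : 'I_k, P (lift ord_max j)] && P ord_max.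
Proof.
apply/forallP/andP => [H|[/forallP H1 H2] j].
  by split; [apply/forallP => j|].
by case: (unliftP ord_max j) => [j' ->|->].
Qed.

Lemma widen_lift k (H : (k <= k.+1)%N) (j : 'I_k) : widen_ord H j = lift ord_max j.
Proof. by apply: val_inj; rewrite /= /bump leqNgt ltn_ord. Qed.

Definition ext k (g : {ffun 'I_k -> bool}) (v : bool) : {ffun 'I_k.+1 -> bool} :=
  [ffun i => if unlift ord_max i is Some j then g j else v].

Lemma ext_max k g v : @ext k g v ord_max = v.
Proof. by rewrite ffunE unlift_none. Qed.
Lemma ext_lift k g v (j : 'I_k) : @ext k g v (lift ord_max j) = g j.
Proof. by rewrite ffunE liftK. Qed.

Definition restr k (f : {ffun 'I_k.+1 -> bool}) : {ffun 'I_k -> bool} :=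
  [ffun j => f (lift ord_max j)].

Lemma sum_ext k (F : {ffun 'I_k.+1 -> bool} -> R) :
  \sum_f F f = \sum_(g : {ffun 'I_k -> bool}) (F (ext g false) + F (ext g true)).
Proof.
rewrite (eq_bigr (fun g => \sum_(v : bool) F (ext g v))); last first.
  by move=> g _; rewrite big_bool addrC.
rewrite pair_big /=.
rewrite (reindex (fun p : {ffun 'I_k -> bool} * bool => ext p.1 p.2)) //.
exists (fun f => (restr f, f ord_max)) => [[g v] _ | f _] /=.
  congr pair; last exact: ext_max.
  by apply/ffunP => j; rewrite ffunE ext_lift.
apply/ffunP => i; case: (unliftP ord_max i) => [j ->|->].
  by rewrite ext_lift ffunE.
by rewrite ext_max.
Qed.

Lemma sum_ffun0 (F : {ffun 'I_0 -> bool} -> R) :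
  \sum_f F f = F [ffun i => false].
Proof.
rewrite (big_pred1 [ffun i => false]) // => f /=.
by apply/esym/eqP/ffunP => [[]].
Qed.

Definition cnt k (f : {ffun 'I_k -> bool}) := #|[pred i | f i]|.
Definition sep k (f : {ffun 'I_k -> bool}) :=
  [forall i : 'I_k, forall j : 'I_k,
              (f i && f j && (i < j)%N) ==> ((nat_of_ord i).+2 <= j)%N].
Definition lz k (f : {ffun 'I_k -> bool}) :=
  [forall i : 'I_k, f i ==> ((nat_of_ord i).+1 < k)%N].

Lemma cnt_ext k g v : cnt (@ext k g v) = (cnt g + v)%N.
Proof.
rewrite /cnt -!sum1_card big_mkcond /= big_ord_recr /=.
rewrite [in RHS]big_mkcond /= inE ext_max; congr (_ + _)%N; try by case: v.
by apply: eq_bigr => i _; rewrite widen_lift !inE ext_lift.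
Qed.

Lemma lz_ext k g v : lz (@ext k g v) = ~~ v.
Proof.
rewrite /lz forallS ext_max /= ltnn.
have -> : [forall j : 'I_k, ext g v (lift ord_max j) ==> ((lift ord_max j).+1 < k.+1)%N].
  by apply/forallP => j; rewrite lift_max ltnS ltn_ord implybT.
by case: v.
Qed.

Lemma sep_ext k g v : sep (@ext k g v) = sep g && (v ==> lz g).
Proof.
apply/forallP/andP => [H|[/forallP Hs Hl] i].
  split.
    apply/forallP => i; apply/forallP => j.
    by have /forallP/(_ (lift ord_max j)) := H (lift ord_max i); rewrite !ext_lift !lift_max.
  apply/implyP => Hv; apply/forallP => i; apply/implyP => Hi.
  have /forallP/(_ ord_max) := H (lift ord_max i).
  by rewrite ext_lift ext_max lift_max Hi Hv /= ltn_ord.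
apply/forallP => j.
case: (unliftP ord_max i) => [i' ->|->]; case: (unliftP ord_max j) => [j' ->|->].
- by rewrite !ext_lift !lift_max; have /forallP := Hs i'.
- rewrite ext_lift ext_max lift_max /= ltn_ord andbT; apply/implyP => /andP[Hi Hv].
  by move: Hl; rewrite Hv /= => /forallP/(_ i'); rewrite Hi.
- by rewrite lift_max /= ltnNge ltnW // andbF.
- by rewrite /= ltnn andbF.
Qed.

Lemma bump_max k (j : 'I_k) : bump k j = j.
Proof. by rewrite /bump leqNgt ltn_ord. Qed.

Lemma alphabar_ext_lift k g v (i : 'I_k) :
  alphabar (@ext k g v) (lift ord_max i) = alphabar g i.
Proof.
rewrite /alphabar existsS ext_max /=.
have -> : (lift ord_max i == ord_max :> 'I_k.+1) = false.
  by apply/negbTE; rewrite -val_eqE /= bump_max neq_ltn ltn_ord.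
rewrite !bump_max /=.
have -> : (i == k.+1 :> nat) = false by apply/negbTE; rewrite neq_ltn ltnS ltnW.
rewrite andbF orbF; congr (~~ _); apply: eq_existsb => j.
by rewrite ext_lift (inj_eq lift_inj) bump_max.
Qed.

Lemma alphabar_ext_max k g v :
  alphabar (@ext k g v) ord_max = ~~ v && lz g.
Proof.
rewrite /alphabar existsS ext_max eqxx /= andbT negb_or andbC; congr (_ && _).
rewrite negb_exists; apply: eq_forallb => j.
rewrite ext_lift bump_max.
have -> : (ord_max == lift ord_max j :> 'I_k.+1) = false.
  by apply/negbTE; rewrite eq_sym -val_eqE /= bump_max neq_ltn ltn_ord.
rewrite /= negb_and -implybE; congr (_ ==> _).
by rewrite ltn_neqAle ltn_ord andbT eq_sym.
Qed.

Lemma monom_ext x y k g v :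
  monom x y (@ext k g v) = monom x y g * x k.+1 ^+ (~~ v && lz g) * y k.+1 ^+ v.
Proof.
rewrite /monom big_ord_recr /= alphabar_ext_max ext_max mulrA; congr (_ * _ * _).
apply: eq_bigr => i _; rewrite widen_lift alphabar_ext_lift ext_lift.
done.
Qed.


Definition S x y k M := \sum_(f : {ffun 'I_k -> bool} | lz f && sep f && (cnt f < M)%N)
   (-1) ^+ cnt f * monom x y f.

Lemma S_step x y k M : S x y k.+1 M =
  \sum_(g : {ffun 'I_k -> bool} | sep g && (cnt g < M)%N)
     (-1) ^+ cnt g * monom x y g * x k.+1 ^+ lz g.
Proof.
rewrite /S big_mkcond sum_ext [RHS]big_mkcond; apply: eq_bigr => g _.
by rewrite !lz_ext !sep_ext !cnt_ext !monom_ext /= andbT addn0 addr0 expr0 mulr1 mulrA.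
Qed.

Lemma S_rec x y k M : S x y k.+2 M.+1 = x k.+2 * S x y k.+1 M.+1 - y k.+1 * S x y k M.
Proof.
rewrite S_step S_step big_mkcond sum_ext /S.
rewrite [X in x _ * X]big_mkcond [X in y _ * X]big_mkcond !mulr_sumr -sumrB.
apply: eq_bigr => h _.
rewrite !sep_ext !cnt_ext !monom_ext !lz_ext /= andbT addn0 addn1 !ltnS.
move: (cnt h) => cc.
case: (sep h); case: (lz h); case: (ltngtP cc M) => H /=; rewrite ?exprS; ring.
Qed.

Fixpoint Q x y (k : nat) : R :=
  match k with
  | 0 => 1
  | k1.+1 => match k1 with 0 => x 1%N | k'.+1 => x k1.+1 * Q x y k1 - y k1 * Q x y k' end
  end.

Lemma S0 x y M : (0 < M)%N -> S x y 0 M = 1.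
Proof.
move=> HM; rewrite /S big_mkcond sum_ffun0.
have -> : lz [ffun i : 'I_0 => false] by apply/forallP => [[]].
have -> : sep [ffun i : 'I_0 => false] by apply/forallP => [[]].
have -> : cnt [ffun i : 'I_0 => false] = 0%N.
  by rewrite /cnt; apply: eq_card0 => -[].
by rewrite HM /= /monom big_ord0 mulr1.
Qed.

Lemma S1 x y M : (0 < M)%N -> S x y 1 M = x 1%N.
Proof.
move=> HM; rewrite S_step big_mkcond sum_ffun0.
have -> : lz [ffun i : 'I_0 => false] by apply/forallP => [[]].
have -> : sep [ffun i : 'I_0 => false] by apply/forallP => [[]].
have -> : cnt [ffun i : 'I_0 => false] = 0%N.
  by rewrite /cnt; apply: eq_card0 => -[].
by rewrite HM /= /monom big_ord0 !mul1r expr1.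
Qed.

Lemma S_Q x y k : forall M, (k./2 < M)%N -> S x y k M = Q x y k.
Proof.
suff H : forall k, (forall M, (k./2 < M)%N -> S x y k M = Q x y k) /\
                   (forall M, (k.+1./2 < M)%N -> S x y k.+1 M = Q x y k.+1).
  by case: (H k).
elim => [|j [IH1 IH2]].
  by split => M HM; [rewrite S0 | rewrite S1].
split => // [[|M]] HM //.
rewrite S_rec /=; congr (_ * _ - _ * _).
  apply: IH2; move: HM; rewrite /= ltnS uphalf_half; case: (odd j) => /=; lia.
apply: IH1; move: HM; rewrite /= ltnS.
done.
Qed.

Lemma cnt0 k (al : {ffun 'I_k -> bool}) : (cnt al == 0%N) = [forall i, ~~ al i].
Proof.
apply/eqP/forallP => [H i|H].
  by apply/negP => Hi; have := card0_eq H i; rewrite inE Hi.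
by apply: eq_card0 => i; rewrite inE (negbTE (H i)).
Qed.

Lemma ell_valid k m (al : {ffun 'I_k -> bool}) :
  ell m al = [&& lz al, sep al & cnt al == m].
Proof.
rewrite /ell; case: eqP => [->|_].
  rewrite cnt0; case: (boolP [forall i, ~~ al i]) => [/forallP H|]; last by rewrite !andbF.
  rewrite andbT; apply/esym/andP; split; apply/forallP => i.
    by rewrite (negbTE (H i)).
  by apply/forallP => j; rewrite (negbTE (H i)).
by rewrite /lz /sep /cnt; case: [forall i, _]; case: [forall i, _]; case: (_ == m).
Qed.

Lemma cheb_sum x y k M :
  \sum_(m < M) (-1) ^+ m * \sum_(al : {ffun 'I_k -> bool} | ell m al) monom x y al = S x y k M.
Proof.
under eq_bigr => m _ do rewrite mulr_sumr big_mkcond.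
rewrite exchange_big /S [RHS]big_mkcond; apply: eq_bigr => al _.
under eq_bigr => m _ do rewrite ell_valid.
case: (lz al); case: (sep al) => /=; try by rewrite big1.
rewrite -big_mkcond /=.
under eq_bigl => m do rewrite eq_sym.
rewrite (big_ord1_eq _ (fun m => (-1) ^+ m * monom x y al)).
done.
Qed.

Lemma cheb_nat_Q x y k : cheb_nat x y k = Q x y k.
Proof.
rewrite /cheb_nat; case: eqP => [->|_]; first by [].
by rewrite cheb_sum S_Q.
Qed.

Lemma QS x y k : Q x y k.+2 = x k.+2 * Q x y k.+1 - y k.+1 * Q x y k.
Proof. by []. Qed.

Lemma sh1 x j : shiftseq x 1 j = x j.+1.
Proof. by rewrite /shiftseq addn1. Qed.
Lemma sh2 x j : shiftseq x 2 j = x j.+2.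
Proof. by rewrite /shiftseq addn2. Qed.

Lemma QF x y k : Q x y k.+2 =
  x 1%N * Q (shiftseq x 1) (shiftseq y 1) k.+1 - y 1%N * Q (shiftseq x 2) (shiftseq y 2) k.
Proof.
set x1 := shiftseq x 1; set y1 := shiftseq y 1; set x2 := shiftseq x 2; set y2 := shiftseq y 2.
suff H : forall k, (Q x y k.+2 = x 1%N * Q x1 y1 k.+1 - y 1%N * Q x2 y2 k) /\
                   (Q x y k.+3 = x 1%N * Q x1 y1 k.+2 - y 1%N * Q x2 y2 k.+1).
  by case: (H k).
elim => [|j [IH1 IH2]].
  rewrite /= /x1 /y1 /x2 /y2 !sh1 !sh2; split; ring.
split => //.
rewrite (QS x y j.+2) IH1 IH2 (QS x1 y1 j.+1) (QS x2 y2 j) /x1 /y1 /x2 /y2 !sh1 !sh2.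
ring.
Qed.

Definition Qm x y k := if k is k'.+1 then Q x y k' else 0.

Lemma QmL x y k : Qm x y k.+2 = x k.+1 * Qm x y k.+1 - y k * Qm x y k.
Proof. by case: k => [|k] /=; rewrite ?mulr1 ?mulr0 ?subr0. Qed.

Lemma QmF x y k : Qm x y k.+2 =
  x 1%N * Qm (shiftseq x 1) (shiftseq y 1) k.+1 - y 1%N * Qm (shiftseq x 2) (shiftseq y 2) k.
Proof.
case: k => [|k]; last exact: QF.
by rewrite /= mulr1 mulr0 subr0.
Qed.

Lemma shiftS x m : shiftseq (shiftseq x m) 1 = shiftseq x m.+1.
Proof. by apply: functional_extensionality => j; rewrite /shiftseq addn1 addSnnS. Qed.
Lemma shiftSS x m : shiftseq (shiftseq x m) 2 = shiftseq x m.+2.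
Proof. by apply: functional_extensionality => j; rewrite /shiftseq addn2 !addSnnS. Qed.
Lemma shift0 x : shiftseq x 0 = x.
Proof. by apply: functional_extensionality => j; rewrite /shiftseq addn0. Qed.

Lemma cheb_pos x y k : cheb x y k%:Z = Q x y k.
Proof. exact: cheb_nat_Q. Qed.
Lemma cheb_m1 x y k : cheb x y (k%:Z - 1) = Qm x y k.
Proof.
case: k => [|k] //.
have -> : (k.+1%:Z - 1 = k%:Z)%R by rewrite intS addrC addKr.
exact: cheb_pos.
Qed.
Lemma cheb_m2 x y k : cheb x y (k%:Z - 2) = Qm x y k.-1.
Proof.
case: k => [|[|k]] //.
have -> : (k.+2%:Z - 2 = k%:Z)%R by rewrite -addn2 PoszD addrK.
exact: cheb_pos.
Qed.

End Comb.

Section Main.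
Variable R : realFieldType.
Variables (a b c : nat -> R) (n : nat).

Local Notation acc := (ac a c).
Definition xb (i : nat) := b i.-1.
Definition yb (i : nat) := acc i.-1.
Definition F k := Q xb yb k.
Local Notation G := (PsiJ a b c n).
Local Notation D := (DJ a b c n).

Lemma sh_1 (x : nat -> R) m : shiftseq x m 1 = x m.+1.
Proof. by rewrite /shiftseq add1n. Qed.

Lemma xb1 : shiftseq xb 1 = b.
Proof. by apply: functional_extensionality => j; rewrite sh1. Qed.
Lemma yb1 : shiftseq yb 1 = acc.
Proof. by apply: functional_extensionality => j; rewrite sh1. Qed.
Lemma xb2 : shiftseq xb 2 = shiftseq b 1.
Proof. by apply: functional_extensionality => j; rewrite sh2 sh1. Qed.
Lemma yb2 : shiftseq yb 2 = shiftseq acc 1.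
Proof. by apply: functional_extensionality => j; rewrite sh2 sh1. Qed.

Lemma PhiF k : PhiJ a b c k = F k.
Proof.
rewrite /PhiJ /F; case: k => [|k]; first by [].
rewrite cheb_m1 cheb_m2 [k.+1.-1]/=.
change (Q xb yb k.+1) with (Qm xb yb k.+2).
by rewrite QmF xb1 yb1 xb2 yb2.
Qed.

Lemma F0 : F 0 = 1. Proof. by []. Qed.
Lemma Frec k : F k.+1 = b k * F k - (if k is k'.+1 then acc k' * F k' else 0).
Proof. by case: k => [|k]; rewrite /F /= ?mulr1 ?subr0. Qed.

Lemma DF : (1 <= n)%N -> D = F n.+2.
Proof.
case: n => [//|m] _.
rewrite /DJ /F.
have -> : Q xb yb m.+3 = Qm xb yb m.+4 by [].
rewrite QmF xb1 yb1 xb2 yb2 (QmL b acc m.+1) (QmL (shiftseq b 1) (shiftseq acc 1) m).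
rewrite !cheb_m2 !cheb_m1 !cheb_pos [m.+1.-1]/=.
change (Qm b acc m.+2) with (Q b acc m.+1).
rewrite !sh1 /xb /yb /ac /pmul /=; ring.
Qed.


Lemma PsiG k p : (k + p)%N = n ->
  G k = b n.+1 * Qm (shiftseq b k) (shiftseq acc k) p.+1
        - acc n * Qm (shiftseq b k) (shiftseq acc k) p.
Proof.
move=> Hn; rewrite /PsiJ.
have -> : (k == n.+1) = false by lia.
have -> : (n - k)%N = p by lia.
rewrite cheb_m1 cheb_pos /ac /pmul.
by [].
Qed.

Lemma Glast : G n.+1 = 1.
Proof. by rewrite /PsiJ eqxx. Qed.

Lemma Gn : G n = b n.+1.
Proof. by rewrite (@PsiG n 0) ?addn0 //= mulr1 mulr0 subr0. Qed.

Lemma Grec j : (j < n)%N -> G j = b j.+1 * G j.+1 - acc j.+1 * G j.+2.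
Proof.
move=> H; have [p Hp] : exists p, n = (j + p.+1)%N by exists (n - j.+1)%N; lia.
case: p Hp => [|q] Hp.
  have E1 : j.+1 = n by lia.
  have E2 : j.+2 = n.+1 by lia.
  rewrite (@PsiG j 1); last by lia.
  change (Qm (shiftseq b j) (shiftseq acc j) 2) with (shiftseq b j 1).
  change (Qm (shiftseq b j) (shiftseq acc j) 1) with (1 : R).
  rewrite sh_1 E2 Glast E1 Gn; ring.
rewrite (@PsiG j q.+2); last by lia.
rewrite (@PsiG j.+1 q.+1); last by lia.
rewrite (@PsiG j.+2 q); last by lia.
rewrite (QmF (shiftseq b j) (shiftseq acc j) q.+1) (QmF (shiftseq b j) (shiftseq acc j) q).
rewrite !shiftS !shiftSS !sh_1.
ring.
Qed.


Lemma Wconst (Hn : (1 <= n)%N) k : (k <= n)%N ->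
  F k.+1 * G k - acc k * F k * G k.+1 = D.
Proof.
suff H : forall i k, (k + i)%N = n -> F k.+1 * G k - acc k * F k * G k.+1 = D.
  by move=> Hk; apply: (H (n - k)%N); lia.
elim => [|i IH] {}k Hk.
  rewrite addn0 in Hk; rewrite Hk Gn Glast DF // (Frec n.+1) /=; ring.
rewrite -(IH k.+1); last by lia.
rewrite (@Grec k); last by lia.
rewrite (Frec k.+1) /=; ring.
Qed.

Lemma delta_sum N m (X : R) :
  \sum_(j < N) ((j : nat) == m)%:R * X = (m < N)%:R * X.
Proof.
rewrite (eq_bigr (fun j : 'I_N => if (j : nat) == m then X else 0)); last first.
  by move=> j _; case: eqP; rewrite ?mul1r ?mul0r.
rewrite -big_mkcond big_ord1_eq.
by case: (m < N)%N; rewrite ?mul1r ?mul0r.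
Qed.

Lemma Jent (i j : 'I_n.+2) : Jmat a b c n i j =
  if (i : nat) == j then b i else if (j : nat) == i.+1 then - a i
  else if (i : nat) == j.+1 then - c j else 0.
Proof. by rewrite mxE. Qed.

Lemma Jrow (k : 'I_n.+2) (f : nat -> R) :
  \sum_(j < n.+2) Jmat a b c n k j * f j =
  b k * f k - (k.+1 < n.+2)%:R * (a k * f k.+1) - (0 < k)%:R * (c k.-1 * f k.-1).
Proof.
have E : forall j : 'I_n.+2, Jmat a b c n k j * f j =
    ((j : nat) == k)%:R * (b k * f k) - ((j : nat) == k.+1)%:R * (a k * f k.+1)
    - (0 < k)%:R * (((j : nat) == k.-1)%:R * (c k.-1 * f k.-1)).
  move=> j; rewrite Jent; move: (nat_of_ord j) (nat_of_ord k) => jj kk.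
  case: (ltngtP jj kk) => H.
  - have -> : (jj == kk.+1) = false by lia.
    case: (eqVneq kk jj.+1) => [->|H2] /=.
      by rewrite eqxx /=; ring.
    have -> : (jj == kk.-1) = false by lia.
    rewrite /=; ring.
  - have -> : (kk == jj.+1) = false by lia.
    have -> : (jj == kk.-1) = false by lia.
    case: (eqVneq jj kk.+1) => [->|H2] /=; ring.
  - rewrite H.
    have -> : (kk == kk.+1) = false by lia.
    case: kk {H} => [|kk] /=; [ring|].
    have -> : (kk.+1 == kk) = false by lia.
    rewrite /=; ring.
under eq_bigr => j _ do rewrite E.
rewrite !sumrB -mulr_sumr !delta_sum ltn_ord.
have -> : (k.-1 < n.+2)%N by have := ltn_ord k; lia.
by rewrite !mul1r.
Qed.


Definition Ap k s := \prod_(k <= j < s) a j.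
Definition Cp s k := \prod_(s <= j < k) c j.

Lemma rJ_up k s : (k <= s)%N -> rJ a b c n k s = Ap k s * F k * G s / D.
Proof. by move=> H; rewrite /rJ H PhiF. Qed.

Lemma rJ_lo k s : (s <= k)%N -> rJ a b c n k s = Cp s k * F s * G k / D.
Proof.
move=> H; rewrite /rJ; case: ifP => H2; last by rewrite PhiF.
have E : k = s by lia.
by rewrite E /Ap /Cp !big_geq // PhiF.
Qed.

Definition Rm : 'M[R]_n.+2 := \matrix_(i, j) rJ a b c n i j.

Lemma JR (Hn : (1 <= n)%N) (HD : D != 0) : Jmat a b c n *m Rm = 1%:M.
Proof.
apply/matrixP => k s; rewrite [LHS]mxE [RHS]mxE.
rewrite (eq_bigr (fun j : 'I_n.+2 => Jmat a b c n k j * rJ a b c n j s)); last first.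
  by move=> j _; rewrite [Rm j s]mxE.
rewrite (Jrow k (fun j => rJ a b c n j s)).
have Hk := ltn_ord k; have Hs := ltn_ord s.
rewrite -val_eqE /=.
move: (nat_of_ord k) (nat_of_ord s) Hk Hs => kk ss Hk Hs.
case: (ltngtP kk ss) => H.
- have -> : (kk.+1 < n.+2)%N by lia.
  rewrite rJ_up ?(ltnW H) // rJ_up //.
  rewrite /Ap (big_ltn H).
  case: kk H Hk => [|k'] H Hk /=.
    rewrite Frec F0 /=; ring.
  rewrite rJ_up; last by lia.
  rewrite /Ap (@big_ltn _ _ _ k'); last by lia.
  rewrite (@big_ltn _ _ _ k'.+1); last by lia.
  rewrite (Frec k'.+1) /ac /pmul; ring.
- case: kk H Hk => [//|k'] H Hk /=.
  rewrite (@rJ_lo k'.+1 ss); last by lia.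
  rewrite (@rJ_lo k' ss); last by lia.
  rewrite /Cp (big_nat_recr _ _ _ (_ : ss <= k')%N); last by lia.
  case: (ltnP k' n) => H2.
    have -> : (k'.+2 < n.+2)%N by lia.
    rewrite (@rJ_lo k'.+2 ss); last by lia.
    rewrite /Cp (big_nat_recr _ _ _ (_ : ss <= k'.+1)%N); last by lia.
    rewrite (big_nat_recr _ _ _ (_ : ss <= k')%N); last by lia.
    rewrite (Grec H2) /ac /pmul /=; ring.
  have E : k' = n by lia.
  have -> : (k'.+2 < n.+2)%N = false by lia.
  rewrite E Gn Glast /=; ring.
- rewrite H /= mulr1n.
  transitivity ((F ss.+1 * G ss - (ss.+1 < n.+2)%:R * (acc ss * F ss * G ss.+1)) / D);
    last first.
    case: (ltnP ss.+1 n.+2) => H2.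
      by rewrite mul1r Wconst // ?divff //; lia.
    have E : ss = n.+1 by lia.
    by rewrite mul0r subr0 E Glast mulr1 -DF // divff.
  rewrite rJ_up // rJ_lo // /Ap /Cp big_geq // big_nat1.
  case: ss {H} Hs => [|s'] Hs /=.
    rewrite Frec F0 /ac /pmul /=; ring.
  rewrite rJ_up // /Ap big_nat1 (Frec s'.+1) /ac /pmul; ring.
Qed.


Definition u k := F k * Ap k n.+1.
Definition Mm : 'M[R]_n.+2 := \matrix_(i, j) (if j == ord0 then u i else (i == j)%:R).

Lemma detMm : \det Mm = \prod_(i < n.+1) a i.
Proof.
rewrite det_trig; last first.
  apply/forallP => i; apply/forallP => j; apply/implyP => Hij; rewrite mxE.
  have -> : (j == ord0) = false by apply/negbTE; rewrite -val_eqE /=; lia.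
  have -> : (i == j) = false by apply/negbTE; rewrite -val_eqE /=; lia.
  by [].
rewrite big_ord_recl mxE eqxx big1 ?mulr1; last first.
  move=> i _; rewrite mxE eqxx.
  have -> : (lift ord0 i == ord0 :> 'I_n.+2) = false by apply/negbTE; rewrite eq_sym neq_lift.
  by [].
by rewrite /u F0 mul1r /Ap big_mkord.
Qed.


Lemma JM0 (Hn : (1 <= n)%N) (i : 'I_n.+2) :
  (Jmat a b c n *m Mm) i ord0 = ((i : nat) == n.+1)%:R * D.
Proof.
rewrite mxE (eq_bigr (fun j : 'I_n.+2 => Jmat a b c n i j * u j)); last first.
  by move=> j _; rewrite [Mm _ _]mxE.
rewrite (Jrow i u).
have Hi := ltn_ord i; move: (nat_of_ord i) Hi => kk Hk.
case: (ltnP kk n.+1) => H.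
  have -> : (kk == n.+1) = false by lia.
  have -> : (kk.+1 < n.+2)%N by lia.
  rewrite /u /Ap (big_ltn H).
  case: kk H Hk => [|k'] H Hk /=.
    rewrite Frec F0 /=; ring.
  rewrite (@big_ltn _ _ _ k'); last by lia.
  rewrite (@big_ltn _ _ _ k'.+1); last by lia.
  rewrite (Frec k'.+1) /ac /pmul /=; ring.
have E : kk = n.+1 by lia.
rewrite E eqxx ltnn /u /Ap big_geq // big_nat1 DF // (Frec n.+1) /ac /pmul /=; ring.
Qed.

Lemma JMj (i j : 'I_n.+2) : j != ord0 -> (Jmat a b c n *m Mm) i j = Jmat a b c n i j.
Proof.
move=> Hj; rewrite mxE (bigD1 j) //= big1 ?addr0.
  by rewrite !mxE (negbTE Hj) eqxx mulr1.
by move=> l Hl; rewrite !mxE (negbTE Hj) (negbTE Hl) mulr0.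
Qed.


Lemma detJM (Hn : (1 <= n)%N) :
  \det (Jmat a b c n *m Mm) = D * \prod_(i < n.+1) a i.
Proof.
rewrite (expand_det_col _ ord0) (bigD1 ord_max) //= big1 ?addr0; last first.
  move=> i Hi; rewrite JM0 //; move: Hi; rewrite -val_eqE /= => /negbTE ->.
  by rewrite !mul0r.
rewrite JM0 // eqxx mul1r /cofactor.
rewrite det_trig; last first.
  apply/forallP => i; apply/forallP => j; apply/implyP => Hij.
  rewrite 2!mxE JMj; last by rewrite eq_sym neq_lift.
  rewrite Jent lift_max lift0.
  have -> : ((i : nat) == j.+1) = false by lia.
  have -> : ((j.+1 : nat) == i.+1) = false by lia.
  have -> : ((i : nat) == j.+2) = false by lia.
  by [].
rewrite (eq_bigr (fun i : 'I_n.+1 => - a i)); last first.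
  move=> i _; rewrite 2!mxE JMj; last by rewrite eq_sym neq_lift.
  rewrite Jent lift_max lift0.
  have -> : ((i : nat) == i.+1) = false by lia.
  by rewrite eqxx.
rewrite prodrN card_ord.
have -> : (nat_of_ord (ord_max : 'I_n.+2) + nat_of_ord (ord0 : 'I_n.+2))%N = n.+1.
  by rewrite /= addn0.
congr (_ * _); rewrite mulrA -exprD.
have -> : ((-1 : R) ^+ (n.+1 + n.+1)) = 1.
  by rewrite exprD -exprMn mulrNN mulr1 expr1n.
by rewrite mul1r.
Qed.

Lemma Ap_neq0 (Ha : forall k, (k <= n)%N -> a k != 0) : \prod_(i < n.+1) a i != 0.
Proof. by apply/prodf_neq0 => i _; apply: Ha; rewrite -ltnS ltn_ord. Qed.

Lemma detJ (Hn : (1 <= n)%N) (Ha : forall k, (k <= n)%N -> a k != 0) :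
  \det (Jmat a b c n) = D.
Proof.
apply: (mulIf (Ap_neq0 Ha)).
by rewrite -[in LHS]detMm -det_mulmx detJM.
Qed.

End Main.

Theorem theorem4p3 (R : realFieldType) (n : nat) (a b c : nat -> R) :
  (1 <= n)%N ->
  (forall k : nat, (k <= n)%N -> a k != 0) ->
  (forall k : nat, (k <= n)%N -> c k != 0) ->
  ((Jmat a b c n \in unitmx) <-> DJ a b c n != 0) /\
  (DJ a b c n != 0 ->
     (forall k s : 'I_(n.+2), invmx (Jmat a b c n) k s = rJ a b c n k s) /\
     \det (invmx (Jmat a b c n)) = (DJ a b c n)^-1).
Proof.
move=> Hn Ha Hc; split.
  by rewrite unitmxE detJ // unitfE.
move=> HD.
have HJR := JR Hn HD.
have [Hu _] := mulmx1_unit HJR.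
have Hinv : invmx (Jmat a b c n) = Rm a b c n.
  by rewrite -[invmx _]mulmx1 -HJR mulmxA mulVmx // mul1mx.
split.
  by move=> k s; rewrite Hinv mxE.
by rewrite det_inv detJ.
Qed.
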